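(* Let $\mathcal X$ be a finite set, let $Q\in\mathbb R^{\mathcal X\times\mathcal X}$ be an irreducible generator matrix (off-diagonal entries nonnegative, rows summing to zero) with invariant probability vector $\pi$ having all entries strictly positive ($Q^{\mathsf T}\pi=0$, $\sum_x\pi_x=1$), and define $A\in\mathbb R^{\mathcal X\times\mathcal X}$ by $A_{xy}:=Q_{yx}\sqrt{\pi_y/\pi_x}-Q_{xy}\sqrt{\pi_x/\pi_y}$. Define $\tilde{\mathcal E}:\mathbb R^{\mathcal X}\to\mathbb R$ and $\tilde{\mathbb J}:\mathbb R^{\mathcal X}\to\mathbb R^{\mathcal X\times\mathcal X}$ by $$\tilde{\mathcal E}(\omega):=1-\sqrt\pi\cdot\omega,\qquad \tilde{\mathbb J}(\omega):=\tfrac12\big(\sqrt\pi\otimes(A\omega)-(A\omega)\otimes\sqrt\pi\big).$$ Then the ODE $\dot\omega=\frac12A\omega$ admits the Hamiltonian structure $(\mathbb R^{\mathcal X},\tilde{\mathcal E},\tilde{\mathbb J})$: $\tilde{\mathbb J}(\omega)$ is skew-symmetric for every $\omega$, the bracket $\{\mathcal G_1,\mathcal G_2\}(\omega):=\langle D\mathcal G_1(\omega),\tilde{\mathbb J}(\omega)D\mathcal G_2(\omega)\rangle$ satisfies the Jacobi identity, and $\frac12A\omega=\tilde{\mathbb J}(\omega)D\tilde{\mathcal E}(\omega)$ for all $\omega\in\mathbb R^{\mathcal X}$.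
   Context: $\sqrt\pi$ denotes the entrywise square root, $v\cdot w$ and $\langle v,w\rangle$ the Euclidean inner product, $D$ the gradient, and $a\otimes b$ the outer product, i.e. the matrix with $(a\otimes b)v=\langle b,v\rangle a$. The ODE $\dot\omega=\frac12A\omega$ arises from $\dot\rho_x=\sum_{y\ne x}A_{xy}\sqrt{\rho_x\rho_y}$ via $\omega_x=\sqrt{\rho_x}$. *)

(* Defs.v *)
From HB Require Import structures.
From mathcomp Require Import all_boot all_order all_algebra.
From mathcomp Require Import all_classical all_reals all_analysis.
Set Implicit Arguments. Unset Strict Implicit. Unset Printing Implicit Defensive.
Import Order.TTheory GRing.Theory Num.Theory.
Import numFieldNormedType.Exports.
Local Open Scope ring_scope.

(* The finite state space X is 'I_n; vectors in R^X are row vectors 'rV[R]_n,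
   with entry x of w written w ord0 x. *)

Section Defs.
Variables (R : realType) (n : nat).

Definition generator (Q : 'M[R]_n) : Prop :=
  (forall x y : 'I_n, x != y -> 0 <= Q x y) /\
  (forall x : 'I_n, \sum_(y < n) Q x y = 0).

Definition irreducible_gen (Q : 'M[R]_n) : Prop :=
  forall x y : 'I_n, connect (fun a b : 'I_n => (a != b) && (0 < Q a b)) x y.

Definition invariant_prob (Q : 'M[R]_n) (pi : 'I_n -> R) : Prop :=
  (forall x, 0 < pi x) /\ (\sum_(x < n) pi x = 1) /\
  (forall y : 'I_n, \sum_(x < n) Q x y * pi x = 0).

Definition sqrtpi (pi : 'I_n -> R) : 'rV[R]_n := \row_x Num.sqrt (pi x).

Definition Amat (Q : 'M[R]_n) (pi : 'I_n -> R) : 'M[R]_n :=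
  \matrix_(x, y) (Q y x * Num.sqrt (pi y / pi x) - Q x y * Num.sqrt (pi x / pi y)).

Definition Aapp (A : 'M[R]_n) (w : 'rV[R]_n) : 'rV[R]_n :=
  \row_x \sum_(y < n) A x y * w ord0 y.

Definition Etil (pi : 'I_n -> R) (w : 'rV[R]_n) : R :=
  1 - \sum_(x < n) (sqrtpi pi) ord0 x * w ord0 x.

Definition Jtil (Q : 'M[R]_n) (pi : 'I_n -> R) (w : 'rV[R]_n) : 'M[R]_n :=
  \matrix_(x, y) (2^-1 * ((sqrtpi pi) ord0 x * (Aapp (Amat Q pi) w) ord0 y
                         - (Aapp (Amat Q pi) w) ord0 x * (sqrtpi pi) ord0 y)).

Definition ebasis (i : 'I_n) : 'rV[R]_n := delta_mx ord0 i.

Definition grad (G : 'rV[R]_n -> R) (w : 'rV[R]_n) : 'rV[R]_n :=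
  \row_i 'D_(ebasis i) G w.

Definition C2 (G : 'rV[R]_n -> R) : Prop :=
  (forall w, differentiable G w) /\
  (forall (i : 'I_n) w, differentiable ('D_(ebasis i) G) w) /\
  (forall (i j : 'I_n), continuous ('D_(ebasis j) ('D_(ebasis i) G))).

Definition bracket (J : 'rV[R]_n -> 'M[R]_n) (G1 G2 : 'rV[R]_n -> R)
    : 'rV[R]_n -> R :=
  fun w => \sum_(x < n) \sum_(y < n)
             (grad G1 w) ord0 x * J w x y * (grad G2 w) ord0 y.

End Defs.

(* Main.v *)
Require Import Defs.
From HB Require Import structures.
From mathcomp Require Import all_boot all_order all_algebra.
From mathcomp Require Import all_classical all_reals all_analysis.
From mathcomp Require Import ring lra.
Import Order.TTheory GRing.Theory Num.Theory.
Import numFieldNormedType.Exports.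
Local Open Scope ring_scope.
Set Implicit Arguments. Unset Strict Implicit.

Section Calc.
Variables (R : realType) (V : normedModType R).
Implicit Types (f g : V -> R).

Lemma isD_add f g x v df dg : is_derive x v f df -> is_derive x v g dg ->
  is_derive x v (fun y => f y + g y) (df + dg).
Proof. move=> H1 H2; exact: is_deriveD. Qed.

Lemma isD_sub f g x v df dg : is_derive x v f df -> is_derive x v g dg ->
  is_derive x v (fun y => f y - g y) (df - dg).
Proof. move=> H1 H2; exact: is_deriveB. Qed.

Lemma isD_mul f g x v df dg : is_derive x v f df -> is_derive x v g dg ->
  is_derive x v (fun y => f y * g y) (f x * dg + g x * df).
Proof. move=> H1 H2; exact: is_deriveM. Qed.

Lemma isD_cst (c : R) x v : is_derive x v (fun _ : V => c) 0.
Proof. exact: is_derive_cst. Qed.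

Lemma isD_sum m (h : 'I_m -> V -> R) x v dh :
  (forall i, is_derive x v (h i) (dh i)) ->
  is_derive x v (fun y => \sum_(i < m) h i y) (\sum_(i < m) dh i).
Proof.
move=> H.
have -> : (fun y => \sum_(i < m) h i y) = \sum_(i < m) h i.
  by apply: funext => y; rewrite fct_sumE.
exact: is_derive_sum.
Qed.

Lemma isD_eq f x v df1 df2 : is_derive x v f df1 -> df1 = df2 -> is_derive x v f df2.
Proof. by move=> ? <-. Qed.

Lemma line_is_derive f (u c : V) (s : R) : derivable f (s *: u + c) u ->
  is_derive s 1 (fun t => f (t *: u + c)) ('D_u f (s *: u + c)).
Proof.
move=> Hd.
have E : (fun h : R => h^-1 *: (((fun t => f (t *: u + c)) \o shift s) (h *: 1)
             - (fun t => f (t *: u + c)) s))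
       = (fun h => h^-1 *: ((f \o shift (s *: u + c)) (h *: u) - f (s *: u + c))).
  apply: funext => h /=; congr (_ *: (f _ - _)).
  by rewrite scalerDl addrA /GRing.scale /= mulr1.
split; first by rewrite /derivable E.
by rewrite /derive E.
Qed.

Lemma derivable_cont (f : R -> R) : (forall x, derivable f x 1) -> continuous f.
Proof.
move=> H x; apply: differentiable_continuous; exact/derivable1_diffP.
Qed.


End Calc.

Lemma contra3 (R : realFieldType) (N x y : R) : x < N / 2 -> y < N / 2 -> N <= x + y -> False.
Proof. move=> *; lra. Qed.

Lemma swap4 (R : zmodType) (a b c d : R) : a - b - c + d = a - c - b + d.
Proof. by rewrite -!addrA (addrCA (- b)). Qed.

Lemma lt2x (R : realFieldType) (x : R) : 0 <= x -> x < 2 * (x + 1).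
Proof. move=> ?; lra. Qed.

Section Mvt.
Variables (R : realType) (V : normedModType R).
Implicit Types (f g : V -> R).

Lemma mvt2 f (u v w : V) (h : R) : 0 < h ->
  (forall x, differentiable f x) -> (forall x, differentiable ('D_u f) x) ->
  exists σ τ, [/\ 0 < σ < h, 0 < τ < h &
    f (h *: u + (h *: v + w)) - f (h *: u + w) - f (h *: v + w) + f w
    = h * h * 'D_v ('D_u f) (σ *: u + (τ *: v + w))].
Proof.
move=> h0 df ddf.
pose phi t := f (t *: u + (h *: v + w)) - f (t *: u + w).
have dphi : forall t : R, is_derive t (1:R) phi
   ('D_u f (t *: u + (h *: v + w)) - 'D_u f (t *: u + w)).
  move=> t; rewrite /phi; apply: isD_sub; apply: line_is_derive; exact: diff_derivable.
have cphi : continuous phi by apply: derivable_cont => t; case: (dphi t).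
have [σ σI Hσ] := MVT h0 (fun t _ => dphi t) (continuous_subspaceT (A:=_) cphi).
pose psi t := 'D_u f (t *: v + (σ *: u + w)).
have dpsi : forall t : R, is_derive t (1:R) psi ('D_v ('D_u f) (t *: v + (σ *: u + w))).
  move=> t; rewrite /psi; apply: line_is_derive; exact: diff_derivable.
have cpsi : continuous psi by apply: derivable_cont => t; case: (dpsi t).
have [τ τI Hτ] := MVT h0 (fun t _ => dpsi t) (continuous_subspaceT (A:=_) cpsi).
exists σ, τ; split.
- by move: σI; rewrite in_itv.
- by move: τI; rewrite in_itv.
move: Hσ Hτ; rewrite /phi /psi !scale0r !add0r subr0.
have -> : h *: v + (σ *: u + w) = σ *: u + (h *: v + w) by rewrite addrCA.
have -> : τ *: v + (σ *: u + w) = σ *: u + (τ *: v + w) by rewrite addrCA.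
move=> E1 E2; rewrite E2 in E1.
have -> : f (h *: u + (h *: v + w)) - f (h *: u + w) - f (h *: v + w) + f w =
  f (h *: u + (h *: v + w)) - f (h *: u + w) - (f (h *: v + w) - f w) by ring.
rewrite E1; ring.
Qed.



Lemma schwarz f (u v w : V) :
  (forall x, differentiable f x) -> (forall x, differentiable ('D_u f) x) ->
  (forall x, differentiable ('D_v f) x) ->
  continuous ('D_v ('D_u f)) -> continuous ('D_u ('D_v f)) ->
  'D_v ('D_u f) w = 'D_u ('D_v f) w.
Proof.
move=> df dfu dfv c1 c2.
set g1 := 'D_v ('D_u f); set g2 := 'D_u ('D_v f).
apply/eqP; rewrite -subr_eq0; apply/negPn/negP => hne.
set e := `|g1 w - g2 w| / 2.
have e0 : 0 < e by rewrite divr_gt0 // normr_gt0.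
have H1 : \forall t \near w, `|g1 w - g1 t| < e := cvgr_dist_lt _ _ (c1 w) _ e0.
have H2 : \forall t \near w, `|g2 w - g2 t| < e := cvgr_dist_lt _ _ (c2 w) _ e0.
have [d1 d10 B1] := (nbhs_ballP _ _).1 (H1 _).
have [d2 d20 B2] := (nbhs_ballP _ _).1 (H2 _).
set d := Num.min d1 d2.
have d0 : 0 < d by rewrite lt_min d10 d20.
set K := `|u| + `|v| + 1.
have K0 : 0 < K by rewrite /K ltr_pwDr // addr_ge0.
set h := d / (2 * K).
have h0 : 0 < h by rewrite divr_gt0 // mulr_gt0.
have hK : h * (2 * K) = d by rewrite /h mulfVK // mulf_neq0 // gt_eqF.
have close : forall a b, 0 < a < h -> 0 < b < h ->
    `|w - (a *: u + (b *: v + w))| < d.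
  move=> a b /andP[a0 ah] /andP[b0 bh].
  have -> : w - (a *: u + (b *: v + w)) = - (a *: u + b *: v).
    by rewrite addrA opprD addrCA subrr addr0.
  rewrite normrN; apply: (le_lt_trans (ler_normD _ _)).
  rewrite !normrZ !gtr0_norm // -hK.
  have nu := normr_ge0 u; have nv := normr_ge0 v.
  apply: (le_lt_trans (_ : _ <= h * `|u| + h * `|v|)).
    by rewrite lerD // ler_wpM2r // ltW.
  rewrite -mulrDr ltr_pM2l // /K; exact: lt2x (addr_ge0 nu nv).
have [σ [τ [σI τI E1]]] := @mvt2 f u v w h h0 df dfu.
have [σ' [τ' [σ'I τ'I E2]]] := @mvt2 f v u w h h0 df dfv.
have Heq : g1 (σ *: u + (τ *: v + w)) = g2 (σ' *: v + (τ' *: u + w)).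
  apply: (@mulfI _ (h * h)); first by rewrite mulf_neq0 // gt_eqF.
  rewrite -E1 -E2.
  have -> : h *: v + (h *: u + w) = h *: u + (h *: v + w) by rewrite addrCA.
  exact: swap4.
have p1 : ball w d1 (σ *: u + (τ *: v + w)).
  rewrite -ball_normE /ball_ /=; apply: (lt_le_trans (close _ _ σI τI)).
  by rewrite /d ge_min lexx.
have p2 : ball w d2 (σ' *: v + (τ' *: u + w)).
  have -> : σ' *: v + (τ' *: u + w) = τ' *: u + (σ' *: v + w) by rewrite addrCA.
  rewrite -ball_normE /ball_ /=; apply: (lt_le_trans (close _ _ τ'I σ'I)).
  by rewrite /d ge_min lexx orbT.
have lt1 := B1 _ p1; have lt2 := B2 _ p2; rewrite /= in lt1 lt2.
rewrite Heq in lt1; rewrite distrC in lt2.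
have Hle := ler_normD (g1 w - g2 (σ' *: v + (τ' *: u + w))) (g2 (σ' *: v + (τ' *: u + w)) - g2 w).
rewrite addrA subrK in Hle.
rewrite /e in lt1 lt2.
exact: contra3 lt1 lt2 Hle.
Qed.

End Mvt.

Section Alg.
Variables (R : realType) (n : nat).
Variables (s a : 'I_n -> R) (A : 'I_n -> 'I_n -> R).
Hypothesis As0 : forall y, \sum_(z < n) A y z * s z = 0.
Implicit Types (g p q X : 'I_n -> R) (H : 'I_n -> 'I_n -> R) (k x y : 'I_n).

Definition JJ x y := 2^-1 * (s x * a y - a x * s y).
Definition DJ k x y := 2^-1 * (s x * A y k - A x k * s y).
Definition pp (g : 'I_n -> R) k := \sum_(i < n) g i * JJ i k.
Definition uu (g : 'I_n -> R) := \sum_(x < n) g x * s x.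
Definition va (g : 'I_n -> R) := \sum_(x < n) g x * a x.
Definition cc (g : 'I_n -> R) k := \sum_(x < n) g x * A x k.
Definition bb (g : 'I_n -> R) := \sum_(k < n) a k * cc g k.
Definition BB (p : 'I_n -> R) (H : 'I_n -> 'I_n -> R) (q : 'I_n -> R) :=
  \sum_(k < n) \sum_(x < n) p k * H k x * q x.
Definition TT (g1 g2 : 'I_n -> R) (H2 : 'I_n -> 'I_n -> R) g3 H3 :=
  \sum_(i < n) \sum_(k < n) g1 i * JJ i k *
     \sum_(x < n) \sum_(y < n) (H2 k x * JJ x y * g3 y + g2 x * DJ k x y * g3 y
                                + g2 x * JJ x y * H3 k y).

Lemma L1 g (X : 'I_n -> R) :
  \sum_(i < n) \sum_(k < n) g i * JJ i k * X k = \sum_(k < n) pp g k * X k.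
Proof.
rewrite exchange_big; apply: eq_bigr => k _; rewrite /pp mulr_suml.
by apply: eq_bigr.
Qed.

Lemma JJskew x y : JJ x y = - JJ y x.
Proof. rewrite /JJ; ring. Qed.

Lemma L3 H g k :
  \sum_(x < n) \sum_(y < n) H k x * JJ x y * g y = - \sum_(x < n) H k x * pp g x.
Proof.
rewrite -sumrN; apply: eq_bigr => x _; rewrite /pp mulr_sumr -sumrN.
by apply: eq_bigr => y _; rewrite (JJskew x y); ring.
Qed.

Lemma L4 H g k :
  \sum_(x < n) \sum_(y < n) g x * JJ x y * H k y = \sum_(y < n) pp g y * H k y.
Proof.
rewrite exchange_big; apply: eq_bigr => y _; rewrite /pp mulr_suml.
by apply: eq_bigr.
Qed.

Lemma sumsum (f h : 'I_n -> R) :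
  (\sum_(x < n) f x) * (\sum_(y < n) h y) = \sum_(x < n) \sum_(y < n) f x * h y.
Proof. by rewrite mulr_suml; apply: eq_bigr => x _; rewrite mulr_sumr. Qed.

Lemma L5 g2 g3 k :
  \sum_(x < n) \sum_(y < n) g2 x * DJ k x y * g3 y
  = 2^-1 * (uu g2 * cc g3 k - cc g2 k * uu g3).
Proof.
rewrite /uu /cc /DJ !sumsum -sumrB mulr_sumr; apply: eq_bigr => x _.
rewrite -sumrB mulr_sumr; apply: eq_bigr => y _; ring.
Qed.

Lemma sc0 g : \sum_(k < n) s k * cc g k = 0.
Proof.
rewrite /cc.
under eq_bigr do rewrite mulr_sumr.
rewrite exchange_big big1 // => x _.
transitivity (g x * \sum_(k < n) A x k * s k); last by rewrite As0 mulr0.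
rewrite mulr_sumr; apply: eq_bigr => k _; ring.
Qed.

Lemma L7 g1 g : \sum_(k < n) pp g1 k * cc g k = 2^-1 * uu g1 * bb g.
Proof.
have E : forall k, pp g1 k = 2^-1 * (uu g1 * a k - va g1 * s k).
  move=> k; rewrite /pp /uu /va /JJ !mulr_suml -sumrB mulr_sumr.
  by apply: eq_bigr => i _; ring.
under eq_bigr do rewrite E.
rewrite /bb; move: (sc0 g); move: (uu g1) (va g1) => U W H0.
have -> : \sum_(k < n) 2^-1 * (U * a k - W * s k) * cc g k
  = 2^-1 * U * \sum_(k < n) a k * cc g k - 2^-1 * W * \sum_(k < n) s k * cc g k.
  rewrite !mulr_sumr -sumrB; apply: eq_bigr => k _; ring.
by rewrite H0 mulr0 subr0.
Qed.

Lemma L6 p H q : (forall k x, H k x = H x k) -> BB p H q = BB q H p.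
Proof.
move=> Hs; rewrite /BB exchange_big; apply: eq_bigr => x _; apply: eq_bigr => k _.
by rewrite Hs; ring.
Qed.

Lemma L2 (F G K : 'I_n -> 'I_n -> R) :
  \sum_(x < n) \sum_(y < n) (F x y + G x y + K x y)
  = \sum_(x < n) \sum_(y < n) F x y + \sum_(x < n) \sum_(y < n) G x y
    + \sum_(x < n) \sum_(y < n) K x y.
Proof.
rewrite -!big_split; apply: eq_bigr => x _; by rewrite -!big_split.
Qed.

Lemma TT_core (P1 P2 P3 C2 C3 : 'I_n -> R) (U2 U3 : R) H2 H3 :
  \sum_(k < n) P1 k * (- (\sum_(x < n) H2 k x * P3 x) + 2^-1 * (U2 * C3 k - C2 k * U3)
                      + \sum_(y < n) P2 y * H3 k y)
  = - BB P1 H2 P3 + 2^-1 * (U2 * (\sum_(k < n) P1 k * C3 k) - U3 * (\sum_(k < n) P1 k * C2 k))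
    + BB P1 H3 P2.
Proof.
transitivity (\sum_(k < n) (- (\sum_(x < n) P1 k * H2 k x * P3 x)
     + 2^-1 * (U2 * (P1 k * C3 k) - U3 * (P1 k * C2 k))
     + \sum_(x < n) P1 k * H3 k x * P2 x)).
  apply: eq_bigr => k _; rewrite mulrDr mulrDr mulrN !mulr_sumr.
  congr (- _ + _ + _); [apply: eq_bigr => x _; ring | ring | apply: eq_bigr => x _; ring].
rewrite /BB !big_split /= sumrN; congr (_ + _ + _).
by rewrite -mulr_sumr sumrB -!mulr_sumr.
Qed.

Lemma TTE g1 g2 H2 g3 H3 :
  TT g1 g2 H2 g3 H3 = - BB (pp g1) H2 (pp g3)
     + 2^-1 * (uu g2 * (2^-1 * uu g1 * bb g3) - uu g3 * (2^-1 * uu g1 * bb g2))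
     + BB (pp g1) H3 (pp g2).
Proof.
rewrite /TT L1.
under eq_bigr do rewrite L2 L3 L4 L5.
by rewrite -!L7 TT_core.
Qed.

Lemma jacobi_alg g1 g2 g3 H1 H2 H3 :
  (forall k x, H1 k x = H1 x k) -> (forall k x, H2 k x = H2 x k) ->
  (forall k x, H3 k x = H3 x k) ->
  TT g1 g2 H2 g3 H3 + TT g2 g3 H3 g1 H1 + TT g3 g1 H1 g2 H2 = 0.
Proof.
move=> S1 S2 S3; rewrite !TTE.
rewrite (@L6 (pp g1) H3 (pp g2) S3) (@L6 (pp g2) H1 (pp g3) S1) (@L6 (pp g3) H2 (pp g1) S2).
ring.
Qed.

End Alg.

Section Main.
Variables (R : realType) (n : nat).
Local Notation e k := (@ebasis R n k).
Implicit Types (Q : 'M[R]_n) (pi : 'I_n -> R) (w : 'rV[R]_n).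

Lemma isD_coord (x v : 'rV[R]_n) (z : 'I_n) :
  is_derive x v (fun N : 'rV[R]_n => N ord0 z) (v ord0 z).
Proof.
have @f : {linear 'rV[R]_n -> R}.
  by exists (fun N : 'rV[R]_n => N ord0 z); do 2![eexists]; do ?[constructor];
     rewrite ?mxE// => ? *; rewrite ?mxE//; move=> ?; rewrite !mxE.
rewrite (_ : (fun _ => _) = f) //.
have cf : continuous f by exact: coord_continuous.
apply: DeriveDef; first exact/diff_derivable/linear_differentiable.
by rewrite deriveE ?diff_lin //; exact: linear_differentiable.
Qed.

Lemma ebasisE (k z : 'I_n) : (e k) ord0 z = (z == k)%:R.
Proof. by rewrite /ebasis mxE eqxx. Qed.

Lemma sum_delta (F : 'I_n -> R) k : \sum_(z < n) F z * (e k) ord0 z = F k.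
Proof.
rewrite (bigD1 k) //= ebasisE eqxx mulr1 big1 ?addr0 // => z zk.
by rewrite ebasisE (negPf zk) mulr0.
Qed.

Lemma grad_Etil (pi : 'I_n -> R) w k : grad (Etil pi) w ord0 k = - sqrtpi pi ord0 k.
Proof.
rewrite /grad mxE.
have H : is_derive w (e k) (Etil pi)
   (0 - \sum_(x < n) (sqrtpi pi ord0 x * (e k) ord0 x + w ord0 x * 0)).
  rewrite /Etil; apply: isD_sub.
  apply: isD_sum => x; apply: isD_mul; try exact: isD_coord; try exact: isD_cst.
rewrite (@derive_val _ _ _ _ _ _ _ H) sub0r.
congr (- _); rewrite -[RHS](sum_delta (fun z => sqrtpi pi ord0 z)).
by apply: eq_bigr => x _; rewrite mulr0 addr0.
Qed.

Lemma isD_Aapp (A : 'M[R]_n) w k y :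
  is_derive w (e k) (fun w => Aapp A w ord0 y) (A y k).
Proof.
have -> : (fun w => Aapp A w ord0 y) = fun w => \sum_(z < n) A y z * w ord0 z.
  by apply: funext => w'; rewrite mxE.
apply: isD_eq.
  apply: isD_sum => z; apply: isD_mul; try exact: isD_coord; try exact: isD_cst.
rewrite -[RHS](sum_delta (fun z => A y z)).
by apply: eq_bigr => x _; rewrite mulr0 addr0.
Qed.

Definition sv pi := fun x => sqrtpi pi ord0 x.
Definition av Q pi w := fun y => Aapp (Amat Q pi) w ord0 y.
Definition Af Q pi := fun x y => Amat Q pi x y.
Definition gv (G : 'rV[R]_n -> R) w := fun x => 'D_(e x) G w.
Definition Hm (G : 'rV[R]_n -> R) w := fun k x => 'D_(e k) ('D_(e x) G) w.

Lemma gradE (G : 'rV[R]_n -> R) w x : grad G w ord0 x = gv G w x.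
Proof. by rewrite /grad mxE. Qed.

Lemma JtilE Q pi w x y : Jtil Q pi w x y =
  JJ (sv pi) (av Q pi w) x y.
Proof. by rewrite /Jtil mxE. Qed.

Lemma isD_J Q pi w k x y : is_derive w (e k) (fun w => Jtil Q pi w x y)
   (DJ (fun x => sqrtpi pi ord0 x) (fun x y => Amat Q pi x y) k x y).
Proof.
have -> : (fun w => Jtil Q pi w x y) = fun w => 2^-1 *
     (sqrtpi pi ord0 x * Aapp (Amat Q pi) w ord0 y - Aapp (Amat Q pi) w ord0 x * sqrtpi pi ord0 y).
  by apply: funext => w'; rewrite JtilE.
apply: isD_eq.
  apply: isD_mul; try exact: isD_cst.
  apply: isD_sub; apply: isD_mul; try exact: isD_Aapp; try exact: isD_cst.
rewrite /DJ; ring.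
Qed.

Lemma isD_grad (G : 'rV[R]_n -> R) w x k : differentiable ('D_(e x) G) w ->
  is_derive w (e k) (fun w => grad G w ord0 x) ('D_(e k) ('D_(e x) G) w).
Proof.
move=> dG.
have -> : (fun w => grad G w ord0 x) = 'D_(e x) G.
  by apply: funext => w'; rewrite /grad mxE.
exact/derivableP/diff_derivable.
Qed.


Lemma D_bracket Q pi (G2 G3 : 'rV[R]_n -> R) w k :
  (forall x, differentiable ('D_(e x) G2) w) ->
  (forall x, differentiable ('D_(e x) G3) w) ->
  grad (bracket (Jtil Q pi) G2 G3) w ord0 k =
  \sum_(x < n) \sum_(y < n)
    (Hm G2 w k x * JJ (sv pi) (av Q pi w) x y * gv G3 w y
     + gv G2 w x * DJ (sv pi) (Af Q pi) k x y * gv G3 w y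
     + gv G2 w x * JJ (sv pi) (av Q pi w) x y * Hm G3 w k y).
Proof.
move=> d2 d3; rewrite /grad mxE.
have H : is_derive w (e k) (bracket (Jtil Q pi) G2 G3)
  (\sum_(x < n) \sum_(y < n)
     ((grad G2 w ord0 x * Jtil Q pi w x y) * 'D_(e k) ('D_(e y) G3) w
      + grad G3 w ord0 y * (grad G2 w ord0 x * DJ (sv pi) (Af Q pi) k x y
                           + Jtil Q pi w x y * 'D_(e k) ('D_(e x) G2) w))).
  rewrite /bracket; apply: isD_sum => x; apply: isD_sum => y.
  apply: isD_mul; last by apply: isD_grad; apply: d3.
  apply: isD_mul; first by apply: isD_grad; apply: d2.
  exact: isD_J.
rewrite (@derive_val _ _ _ _ _ _ _ H).
apply: eq_bigr => x _; apply: eq_bigr => y _.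
rewrite !gradE JtilE /Hm; ring.
Qed.

Lemma bracketE Q pi (G1 F : 'rV[R]_n -> R) w :
  bracket (Jtil Q pi) G1 F w = \sum_(i < n) \sum_(k < n)
     gv G1 w i * JJ (sv pi) (av Q pi w) i k * grad F w ord0 k.
Proof.
rewrite /bracket; apply: eq_bigr => i _; apply: eq_bigr => k _.
by rewrite !gradE JtilE.
Qed.

Lemma bracket_bracket Q pi (G1 G2 G3 : 'rV[R]_n -> R) w :
  (forall x, differentiable ('D_(e x) G2) w) ->
  (forall x, differentiable ('D_(e x) G3) w) ->
  bracket (Jtil Q pi) G1 (bracket (Jtil Q pi) G2 G3) w =
  TT (sv pi) (av Q pi w) (Af Q pi) (gv G1 w) (gv G2 w) (Hm G2 w) (gv G3 w) (Hm G3 w).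
Proof.
move=> d2 d3; rewrite bracketE /TT; apply: eq_bigr => i _; apply: eq_bigr => k _.
by rewrite D_bracket.
Qed.

Lemma Hm_sym (G : 'rV[R]_n -> R) w : C2 G -> forall k x, Hm G w k x = Hm G w x k.
Proof.
move=> [dG [ddG cG]] k x; rewrite /Hm.
exact: schwarz (dG) (ddG x) (ddG k) (cG x k) (cG k x).
Qed.

Lemma part3_alg (s a : 'I_n -> R) x :
  \sum_(y < n) s y * s y = 1 -> \sum_(y < n) a y * s y = 0 ->
  2^-1 * a x = \sum_(y < n) JJ s a x y * (- s y).
Proof.
move=> H1 H2.
transitivity (2^-1 * a x * (\sum_(y < n) s y * s y) - 2^-1 * s x * (\sum_(y < n) a y * s y)).
  by rewrite H1 H2; ring.
rewrite !mulr_sumr -sumrB; apply: eq_bigr => y _; rewrite /JJ; ring.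
Qed.

Lemma termA (q1 q2 ry rz pz : R) : ry != 0 -> rz != 0 -> rz * rz = pz ->
  (q1 * (rz / ry) - q2 * (ry / rz)) * rz = q1 * pz / ry - q2 * ry.
Proof. by move=> h1 h2 <-; field; rewrite h1 h2. Qed.

Lemma termB (q1 q2 ry rz py : R) : ry != 0 -> rz != 0 -> ry * ry = py ->
  ry * (q1 * (rz / ry) - q2 * (ry / rz)) = q1 * rz - q2 * py / rz.
Proof. by move=> h1 h2 <-; field; rewrite h1 h2. Qed.

Section Props.
Variables (Q : 'M[R]_n) (pi : 'I_n -> R).
Hypothesis hQ : generator Q.
Hypothesis hpi : invariant_prob Q pi.

Let r x := Num.sqrt (pi x).
Lemma r_neq0 x : r x != 0.
Proof. by rewrite gt_eqF // sqrtr_gt0; case: hpi. Qed.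
Lemma rr x : r x * r x = pi x.
Proof. by rewrite -expr2 sqr_sqrtr // ltW //; case: hpi. Qed.
Lemma svE x : sv pi x = r x.
Proof. by rewrite /sv mxE. Qed.

Lemma AfE x y : Af Q pi x y = Q y x * (r y / r x) - Q x y * (r x / r y).
Proof.
have p0 z : 0 <= pi z by apply: ltW; case: hpi.
by rewrite /Af mxE !sqrtrM ?sqrtrV.
Qed.

Lemma As0 y : \sum_(z < n) Af Q pi y z * sv pi z = 0.
Proof.
transitivity ((\sum_(z < n) Q z y * pi z) / r y - (\sum_(z < n) Q y z) * r y).
  rewrite !mulr_suml -sumrB; apply: eq_bigr => z _.
  by rewrite AfE svE; apply: termA; rewrite ?r_neq0 ?rr.
case: hpi => _ [_ ->]; case: hQ => _ ->; by rewrite mul0r mul0r subrr.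
Qed.

Lemma sA0 z : \sum_(y < n) sv pi y * Af Q pi y z = 0.
Proof.
transitivity ((\sum_(y < n) Q z y) * r z - (\sum_(y < n) Q y z * pi y) / r z).
  rewrite !mulr_suml -sumrB; apply: eq_bigr => y _.
  by rewrite AfE svE; apply: termB; rewrite ?r_neq0 ?rr.
case: hpi => _ [_ ->]; case: hQ => _ ->; by rewrite mul0r mul0r subrr.
Qed.

Lemma ss1 : \sum_(y < n) sv pi y * sv pi y = 1.
Proof.
case: hpi => _ [<- _]; apply: eq_bigr => y _; by rewrite svE rr.
Qed.

Lemma as0 w : \sum_(y < n) av Q pi w y * sv pi y = 0.
Proof.
rewrite /av.
transitivity (\sum_(y < n) \sum_(z < n) w ord0 z * (sv pi y * Af Q pi y z)).
  apply: eq_bigr => y _; rewrite mxE mulr_suml; apply: eq_bigr => z _.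
  rewrite /Af; ring.
rewrite exchange_big big1 // => z _; by rewrite -mulr_sumr sA0 mulr0.
Qed.

End Props.

End Main.

Unset Implicit Arguments.

Theorem proposition4p1 (R : realType) (n : nat) (Q : 'M[R]_n) (pi : 'I_n -> R)
  (hQ : generator Q) (hirr : irreducible_gen Q) (hpi : invariant_prob Q pi) :
  (* skew-symmetry of tilde J(w) *)
  (forall w : 'rV[R]_n, (Jtil Q pi w)^T = - Jtil Q pi w) /\
  (* Jacobi identity of the bracket *)
  (forall G1 G2 G3 : 'rV[R]_n -> R, C2 G1 -> C2 G2 -> C2 G3 ->
     forall w : 'rV[R]_n,
       bracket (Jtil Q pi) G1 (bracket (Jtil Q pi) G2 G3) w
     + bracket (Jtil Q pi) G2 (bracket (Jtil Q pi) G3 G1) w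
     + bracket (Jtil Q pi) G3 (bracket (Jtil Q pi) G1 G2) w = 0) /\
  (* 1/2 A w = tilde J(w) D tilde E(w) *)
  (forall (w : 'rV[R]_n) (x : 'I_n),
     2^-1 * (Aapp (Amat Q pi) w) ord0 x
     = \sum_(y < n) Jtil Q pi w x y * (grad (Etil pi) w) ord0 y).
Proof.
split; [|split].
- move=> w; apply/matrixP => i j; rewrite [LHS]mxE [RHS]mxE !JtilE /JJ; ring.
- move=> G1 G2 G3 c1 c2 c3 w.
  have dd (G : 'rV[R]_n -> R) : C2 G -> forall x, differentiable ('D_(ebasis R x) G) w.
    by move=> [_ [ddG _]] x; exact: ddG.
  rewrite !bracket_bracket; try exact: dd.
  apply: jacobi_alg; first exact: As0.
  + exact: Hm_sym.
  + exact: Hm_sym.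
  + exact: Hm_sym.
- move=> w x.
  have -> : \sum_(y < n) Jtil Q pi w x y * grad (Etil pi) w ord0 y
          = \sum_(y < n) JJ (sv pi) (av Q pi w) x y * (- sv pi y).
    by apply: eq_bigr => y _; rewrite JtilE grad_Etil.
  apply: part3_alg; [exact: (ss1 hpi) | exact: (as0 hQ hpi)].
Qed.
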